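(* Let $\Gamma$ be a single-player extensive-form game without chance nodes, and let $z^*\in\arg\max_{z\in\mathcal Z}u_1(z)$. Then $$\mathrm{VoR}^{\mathrm{opt}}(\Gamma)\le\frac{\max_{z\in\mathcal Z}u_1(z)}{\max_{z\in\mathcal Z}\alpha(z)u_1(z)}\le\frac{1}{\alpha(z^* )}.$$
   Context: A single-player extensive-form game without chance nodes consists of a finite rooted tree (nodes $\mathcal H$, leaves $\mathcal Z$, actions $A_h$), all nonterminal nodes belonging to Player 1, a utility $u_1:\mathcal Z\to\mathbb R_{\ge0}$, and a partition $\mathcal I_1$ of nonterminal nodes into infosets with common action sets $A_I$. For a node $h$ with root-to-$h$ path $(h_0,\dots,h_{d-1})$, $\mathrm{obs}_1(h)=(I_k,a_k)_k$ lists infosets of and actions taken at the $h_k$. $\mathrm{pr}_1(\Gamma)$ has the same tree and utilities, with each infoset partitioned into classes of $h\sim h'\iff\mathrm{obs}_1(h)=\mathrm{obs}_1(h')$. Behavioral strategies assign distributions over $A_I$ to infosets; $u_1(\mathrm{opt}(\cdot))$ is the maximum expected utility; $\mathrm{VoR}^{\mathrm{opt}}(\Gamma)=u_1(\mathrm{opt}(\mathrm{pr}_1(\Gamma)))/u_1(\mathrm{opt}(\Gamma))$. For $z\in\mathcal Z$ with path infosets/actions $(I_k,a_k)$, and $I\in\mathcal I_1$, $a\in A_I$: $n_z(I)=|\{k:I_k=I\}|$, $n_z(a)=|\{k:I_k=I,a_k=a\}|$, $p_z(a)=n_z(a)/n_z(I)$, $\alpha(z)=\prod_{I:n_z(I)>1}\prod_{a\in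 A_I:n_z(a)>0}p_z(a)^{n_z(a)}$. *)

(* Defs.v *)
From HB Require Import structures.
From mathcomp Require Import all_boot all_order all_algebra.
From mathcomp Require Import boolp classical_sets reals.
Set Implicit Arguments. Unset Strict Implicit. Unset Printing Implicit Defensive.
Import Order.TTheory GRing.Theory Num.Theory.
Local Open Scope ring_scope.

(* A finite game tree of a single player, no chance nodes.  Nonterminal nodes
   carry an infoset label [x : L]; the node [Node x c] has the action
   [a] available iff [c a = Some child].
   Finiteness of the tree is automatic (inductive, finitely branching). *)
Inductive tree (R : Type) (L : Type) (A : finType) :=
| Leaf of R
| Node of L & (A -> option (tree R L A)).
Arguments Leaf {R L A}.
Arguments Node {R L A}.

Section Game.
Variables (R : realType) (A : finType).

Fixpoint nodeinfo (L : eqType) (t : tree R L A) : seq (L * {set A}) :=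
  match t with
  | Leaf _ => [::]
  | Node x c => (x, [set a | isSome (c a)]) ::
      flatten [seq match c a with Some t' => nodeinfo t' | None => [::] end
              | a <- enum A]
  end.

(* well-formedness: the partition of nonterminal nodes into infosets (nodes
   with equal label) has common, nonempty action sets A_I *)
Definition wf (L : eqType) (t : tree R L A) : Prop :=
  (forall x S S', (x, S) \in nodeinfo t -> (x, S') \in nodeinfo t -> S = S')
  /\ (forall p, p \in nodeinfo t -> p.2 != finset.set0).

(* leaves z, each with obs_1(z) (sequence of (infoset, action) on the
   root-to-z path) and its utility u_1(z) *)
Fixpoint leaves_from (L : eqType) (o : seq (L * A)) (t : tree R L A)
  : seq (seq (L * A) * R) :=
  match t with
  | Leaf u => [:: (o, u)]
  | Node x c =>
      flatten [seq match c a with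
                   | Some t' => leaves_from (rcons o (x, a)) t'
                   | None => [::] end | a <- enum A]
  end.

Definition leaves (L : eqType) (t : tree R L A) := leaves_from [::] t.

Definition behavioral (L : eqType) (t : tree R L A) (s : L -> A -> R) : Prop :=
  forall x S, (x, S) \in nodeinfo t ->
    [/\ forall a, 0 <= s x a, forall a, a \notin S -> s x a = 0
      & \sum_(a : A) s x a = 1].

Fixpoint eu (L : eqType) (s : L -> A -> R) (t : tree R L A) : R :=
  match t with
  | Leaf u => u
  | Node x c => \sum_(a : A) s x a *
                 match c a with Some t' => eu s t' | None => 0 end
  end.

Definition opt_value (L : eqType) (t : tree R L A) : R :=
  sup [set r : R | exists s, behavioral t s /\ r = eu s t].

(* pr_1(G): same tree, each infoset I refined by obs_1(h); new label (I, obs_1 h) *)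
Fixpoint relabel (L : eqType) (o : seq (L * A)) (t : tree R L A)
  : tree R (L * seq (L * A))%type A :=
  match t with
  | Leaf u => Leaf u
  | Node x c => Node (x, o)
      (fun a => match c a with
                | Some t' => Some (relabel (rcons o (x, a)) t')
                | None => None end)
  end.

Definition pr1 (L : eqType) (t : tree R L A) := relabel [::] t.

Definition VoR (L : eqType) (t : tree R L A) : R :=
  opt_value (pr1 t) / opt_value t.

Definition nI (I : finType) (o : seq (I * A)) (i : I) : nat :=
  count (fun p => p.1 == i) o.
Definition na (I : finType) (o : seq (I * A)) (i : I) (a : A) : nat :=
  count (pred1 (i, a)) o.
Definition alpha (I : finType) (o : seq (I * A)) : R :=
  \prod_(i : I | (1 < nI o i)%N)
    \prod_(a : A | (0 < na o i a)%N)
      ((na o i a)%:R / (nI o i)%:R) ^+ (na o i a).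

(* max_z u_1(z) and max_z alpha(z) u_1(z) (utilities are >= 0, leaves nonempty) *)
Definition max_u (I : finType) (t : tree R I A) : R :=
  \big[Num.max/0]_(z <- leaves t) z.2.
Definition max_alpha_u (I : finType) (t : tree R I A) : R :=
  \big[Num.max/0]_(z <- leaves t) (alpha z.1 * z.2).
End Game.

(* Main.v *)
Require Import Defs.
From HB Require Import structures.
From mathcomp Require Import all_boot all_order all_algebra.
From mathcomp Require Import boolp classical_sets reals.
Import Order.TTheory GRing.Theory Num.Theory.
Local Open Scope ring_scope.
Set Implicit Arguments. Unset Strict Implicit. Unset Printing Implicit Defensive.

Section Aux.
Variables (R : realType) (A : finType).

Fixpoint tree_ind' (L : Type) (P : tree R L A -> Prop) (Hl : forall u, P (Leaf u))
  (Hn : forall x c, (forall a t', c a = Some t' -> P t') -> P (Node x c))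
  (t : tree R L A) : P t :=
  match t with
  | Leaf u => Hl u
  | Node x c => Hn x c (fun a => match c a as o return forall t', o = Some t' -> P t' with
       | Some t0 => fun t' e => eq_ind t0 P (@tree_ind' L P Hl Hn t0) t' (Some_inj e)
       | None => fun t' e => ltac:(discriminate e) end)
  end.

Lemma nodeinfo_child (L : eqType) x (c : A -> option (tree R L A)) a t' :
  c a = Some t' -> {subset nodeinfo t' <= nodeinfo (Node x c)}.
Proof.
move=> e p pin; rewrite /= inE; apply/orP; right; apply/flatten_mapP.
by exists a; rewrite ?mem_enum // e.
Qed.

Lemma leaves_child (L : eqType) o x (c : A -> option (tree R L A)) a t' :
  c a = Some t' -> {subset leaves_from (rcons o (x, a)) t' <= leaves_from o (Node x c)}.
Proof.
move=> e p pin; apply/flatten_mapP.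
by exists a; rewrite ?mem_enum // e.
Qed.

Lemma leaves_node (L : eqType) o x (c : A -> option (tree R L A)) z :
  z \in leaves_from o (Node x c) ->
  exists a t', c a = Some t' /\ z \in leaves_from (rcons o (x, a)) t'.
Proof.
move=> /flatten_mapP [a _]; case e: (c a) => [t'|] // h.
by exists a, t'.
Qed.

Lemma behavioral_child (L : eqType) x (c : A -> option (tree R L A)) a t' s :
  behavioral (Node x c) s -> c a = Some t' -> behavioral t' s.
Proof.
move=> hb e y S h; apply: hb; exact: nodeinfo_child e _ h.
Qed.

Lemma eu_le (L : eqType) (s : L -> A -> R) M (t : tree R L A) o :
  behavioral t s -> (forall z, z \in leaves_from o t -> z.2 <= M) -> eu s t <= M.
Proof.
move: o; elim/(@tree_ind' L): t => [u|x c IH] o Hb Hz.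
  by apply: (Hz (o, u)); rewrite inE.
have [H0 H1 H2] := Hb x _ (mem_head _ _).
apply: (@le_trans _ _ (\sum_a s x a * M)).
  apply: ler_sum => a _; case e: (c a) => [t'|]; cbv beta iota.
    apply: ler_wpM2l; first exact: H0.
    apply: (IH a t' e (rcons o (x, a))); first exact: (behavioral_child Hb e).
    by move=> z zin; apply: Hz; exact: leaves_child e _ zin.
  by rewrite (H1 a) ?mul0r // inE e.
by rewrite -mulr_suml H2 mul1r.
Qed.

Lemma eu_ge0 (L : eqType) (s : L -> A -> R) (t : tree R L A) o :
  (forall x a, 0 <= s x a) -> (forall z, z \in leaves_from o t -> 0 <= z.2) ->
  0 <= eu s t.
Proof.
move: o; elim/(@tree_ind' L): t => [u|x c IH] o Hs Hz.
  by apply: (Hz (o, u)); rewrite inE.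
apply: sumr_ge0 => a _; apply: mulr_ge0 => //.
case e: (c a) => [t'|] //; apply: (IH a t' e (rcons o (x, a))) => //.
by move=> z zin; apply: Hz; exact: leaves_child e _ zin.
Qed.

Lemma relabel_leaves (L : eqType) (t : tree R L A) o o' o'' z :
  z \in leaves_from o (relabel o' t) ->
  exists2 z', z' \in leaves_from o'' t & z'.2 = z.2.
Proof.
move: o o' o''; elim/(@tree_ind' L): t => [u|x c IH] o o' o''.
  by rewrite /= inE => /eqP ->; exists (o'', u); rewrite ?inE.
move=> /flatten_mapP [a _]; case e: (c a) => [t'|] // h.
have [z' h1 h2] := IH a t' e _ _ (rcons o'' (x, a)) h.
by exists z' => //; exact: leaves_child e _ h1.
Qed.

Lemma path_in (L : eqType) (t : tree R L A) o0 z q :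
  z \in leaves_from o0 t -> q \in z.1 ->
  q \in o0 \/ exists S, (q.1, S) \in nodeinfo t /\ q.2 \in S.
Proof.
move: o0; elim/(@tree_ind' L): t => [u|x c IH] o0.
  by rewrite /= inE => /eqP -> /=; left.
move=> /leaves_node [a [t' [e h]]] qin.
case: (IH a t' e _ h qin) => [|[S [h1 h2]]].
  rewrite mem_rcons inE => /orP [/eqP ->|]; last by left.
  right; exists [set b | isSome (c b)]; split; first by rewrite /= inE eqxx.
  by rewrite inE e.
by right; exists S; split => //; exact: nodeinfo_child e _ h1.
Qed.

Lemma eu_reach (L : eqType) (s : L -> A -> R) (t : tree R L A) o0 z :
  (forall x a, 0 <= s x a) -> (forall z, z \in leaves_from o0 t -> 0 <= z.2) ->
  z \in leaves_from o0 t ->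
  exists2 p, z.1 = o0 ++ p & (\prod_(q <- p) s q.1 q.2) * z.2 <= eu s t.
Proof.
move: o0; elim/(@tree_ind' L): t => [u|x c IH] o0 Hs Hz.
  by rewrite /= inE => /eqP -> /=; exists [::]; rewrite ?cats0 // big_nil mul1r.
move=> /leaves_node [a [t' [e h]]].
have Hz' : forall z, z \in leaves_from (rcons o0 (x, a)) t' -> 0 <= z.2.
  by move=> z' zin; apply: Hz; exact: leaves_child e _ zin.
have [p h1 h2] := IH a t' e _ Hs Hz' h.
exists ((x, a) :: p); first by rewrite h1 cat_rcons.
rewrite big_cons -mulrA /= (bigD1 a) //= e.
apply: (@le_trans _ _ (s x a * eu s t')); first by apply: ler_wpM2l.
rewrite lerDl; apply: sumr_ge0 => b _; apply: mulr_ge0 => //.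
case e': (c b) => [t''|] //; apply: (eu_ge0 (o := rcons o0 (x, b))) => //.
by move=> z' zin; apply: Hz; exact: leaves_child e' _ zin.
Qed.

Lemma prod_count (T : finType) (F : T -> R) (o : seq T) :
  \prod_(q <- o) F q = \prod_(q : T) F q ^+ count_mem q o.
Proof.
elim: o => [|p o IH]; first by rewrite big_nil big1.
rewrite big_cons IH /=.
under [in RHS]eq_bigr => q _ do rewrite exprD.
rewrite big_split /=; congr (_ * _).
rewrite (bigD1 p) //= eqxx expr1 big1 ?mulr1 // => q /negbTE.
by rewrite eq_sym => ->.
Qed.

End Aux.

Section Strat.
Variables (R : realType) (A : finType) (I : finType).

Definition pickact (t : tree R I A) (x : I) : option A :=
  [pick a | [exists S : {set A}, ((x, S) \in nodeinfo t) && (a \in S)]].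

Definition strat (t : tree R I A) (o : seq (I * A)) (x : I) (a : A) : R :=
  if (0 < nI o x)%N then (na o x a)%:R / (nI o x)%:R
  else if pickact t x is Some b then (a == b)%:R else 0.

Lemma sum_na (o : seq (I * A)) x : (\sum_(a : A) na o x a)%N = nI o x.
Proof.
elim: o => [|[p1 p2] o IH]; first by rewrite big1.
rewrite /na /nI /= big_split /=; congr addn; last exact: IH.
rewrite (bigD1 p2) //= big1 ?addn0.
  by rewrite xpair_eqE eqxx andbT eq_sym.
by move=> a /negbTE; rewrite xpair_eqE eq_sym => ->; rewrite andbF.
Qed.

Lemma na_le (o : seq (I * A)) x a : (na o x a <= nI o x)%N.
Proof. by apply: sub_count => p /eqP ->. Qed.

Lemma strat_ge0 t o x a : 0 <= strat t o x a.
Proof.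
rewrite /strat; case: ifP => _; first exact: divr_ge0.
by case: (pickact t x).
Qed.

Lemma strat_behavioral (t : tree R I A) z :
  wf t -> z \in leaves t -> behavioral t (strat t z.1).
Proof.
move=> [wf1 wf2] zin x S xS; split.
- by move=> a; exact: strat_ge0.
- move=> a aS; rewrite /strat; case: ifP => _.
    case: (posnP (na z.1 x a)) => [->|]; first by rewrite mul0r.
    rewrite /na -has_count has_pred1 => /(path_in zin) [//|[S' [h1 h2]]].
    by rewrite (wf1 _ _ _ xS h1) h2 in aS.
  rewrite /pickact; case: pickP => [b /existsP [S' /andP [h1 h2]]|//].
  have eab : (a == b) = false.
    by apply/eqP => ab; rewrite ab (wf1 _ _ _ xS h1) h2 in aS.
  by rewrite eab.
- rewrite /strat; case h: (0 < nI z.1 x)%N.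
    by rewrite -mulr_suml -natr_sum sum_na divff // pnatr_eq0 -lt0n.
  rewrite /pickact; case: pickP => [b _|hn].
    rewrite (bigD1 b) //= eqxx big1 ?addr0 // => a /negbTE.
    by move=> ->.
  have := wf2 _ xS => /set0Pn [a aS].
  have := hn a; rewrite /= => /negbT/negP; case.
  by apply/existsP; exists S; rewrite xS aS.
Qed.

End Strat.

Section Main.
Variables (R : realType) (A : finType) (I : finType).

Lemma alpha_gt0 (o : seq (I * A)) : 0 < @alpha R A I o.
Proof.
apply: prodr_gt0 => i _; apply: prodr_gt0 => a h; apply: exprn_gt0.
by apply: divr_gt0; rewrite ltr0n //; exact: leq_trans h (na_le _ _ _).
Qed.

Lemma prod_strat (t : tree R I A) o :
  \prod_(q <- o) strat t o q.1 q.2 = @alpha R A I o.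
Proof.
rewrite prod_count (eq_bigr (fun q => strat t o q.1 q.2 ^+ na o q.1 q.2));
  last by case.
rewrite -(@pair_bigA _ _ _ I A (fun i a => strat t o i a ^+ na o i a)) /alpha.
rewrite [RHS]big_mkcond; apply: eq_bigr => i _.
have [h0|hpos] := posnP (nI o i).
  rewrite h0 /=; apply: big1 => a _.
  have : (na o i a <= 0)%N by rewrite -h0 na_le.
  by rewrite leqn0 => /eqP ->; rewrite expr0.
rewrite /strat hpos.
case: ifP => h1.
  rewrite [RHS]big_mkcond; apply: eq_bigr => a _ /=.
  by have [->|hp] := posnP (na o i a); rewrite ?expr0 ?hp.
have hn1 : nI o i = 1%N by apply/eqP; rewrite eqn_leq hpos leqNgt h1.
apply: big1 => a _; have := na_le o i a; rewrite hn1.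
by case: (na o i a) => [|[|]] // _; rewrite ?expr0 ?divr1 ?expr1.
Qed.

Lemma strat_value (t : tree R I A) z :
  wf t -> (forall z, z \in leaves t -> 0 <= z.2) -> z \in leaves t ->
  behavioral t (strat t z.1) /\ @alpha R A I z.1 * z.2 <= eu (strat t z.1) t.
Proof.
move=> hwf hz zin; split; first exact: strat_behavioral.
have [p h1 h2] := eu_reach (@strat_ge0 R A I t z.1) hz zin.
rewrite -(prod_strat t z.1).
have e : z.1 = p by rewrite h1.
by rewrite {1}e.
Qed.

End Main.

Lemma bigmax_ge0 (R : realType) (T : Type) (s : seq T) (F : T -> R) :
  0 <= \big[Num.max/0]_(z <- s) F z.
Proof. by elim: s => [|x s IH]; rewrite ?big_nil ?big_cons // le_max IH orbT. Qed.

Theorem proposition7 (R : realType) (I A : finType) (G : tree R I A)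
    (zstar : seq (I * A) * R) :
  wf G ->
  (forall z, z \in leaves G -> 0 <= z.2) ->
  zstar \in leaves G ->
  (forall z, z \in leaves G -> z.2 <= zstar.2) ->
  VoR G <= max_u G / max_alpha_u G /\
  max_u G / max_alpha_u G <= 1 / @alpha R A I zstar.1.
Proof.
move=> hwf hz0 zsin hzmax.
set Mu := max_u G; set Ma := max_alpha_u G.
have hMu0 : 0 <= Mu by apply: bigmax_ge0.
have hMa0 : 0 <= Ma by apply: bigmax_ge0.
have hleMu : forall z, z \in leaves G -> z.2 <= Mu.
  by move=> z zin; exact: (le_bigmax_seq 0 z xpredT (fun z => z.2) zin).
have hMuz : Mu <= zstar.2.
  rewrite /Mu /max_u big_seq; apply: bigmax_le => [|z zin]; [exact: hz0|exact: hzmax].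
have hal0 := @alpha_gt0 R A I zstar.1.
have hMaz : @alpha R A I zstar.1 * zstar.2 <= Ma.
  by exact: (le_bigmax_seq 0 zstar xpredT (fun z => alpha R z.1 * z.2) zsin).
set E := [set r : R | exists s, behavioral G s /\ r = eu s G]%classic.
have hub : ubound E Mu.
  by move=> r [s [hs ->]]; apply: (eu_le (o := [::])) => // z zin; apply: hleMu.
have hEge : forall s, behavioral G s -> eu s G <= opt_value G.
  move=> s hs; apply: ub_le_sup; first by exists Mu.
  by exists s.
have hstrat : forall z, z \in leaves G -> @alpha R A I z.1 * z.2 <= opt_value G.
  move=> z zin; have [hb hv] := strat_value hwf hz0 zin.
  exact: le_trans hv (hEge _ hb).
have hopt0 : 0 <= opt_value G.
  apply: le_trans (hstrat _ zsin); apply: mulr_ge0; first exact: ltW.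
  exact: hz0.
have hMaopt : Ma <= opt_value G.
  by rewrite /Ma /max_alpha_u big_seq; apply: bigmax_le.
have hpr : opt_value (pr1 G) <= Mu.
  rewrite /opt_value.
  set E' := [set r : R | _]%classic.
  have [[r Er]|E0] := pselect (exists r, E' r).
    apply: ge_sup; first by exists r.
    move=> r' [s [hs ->]]; apply: (eu_le (o := [::])) => // z zin.
    have [z' z'in <-] := relabel_leaves [::] zin.
    exact: hleMu.
  have -> : E' = set0.
    by apply/seteqP; split => // r Er; exfalso; apply: E0; exists r.
  by rewrite sup0.
have [Ma0|Mapos] := eqVneq Ma 0.
  have hMu00 : Mu <= 0.
    rewrite /Mu /max_u big_seq; apply: bigmax_le => // z zin.
    have := hz0 z zin.
    have := le_bigmax_seq 0 z xpredT (fun z => alpha R z.1 * z.2) zin isT.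
    move=> h1 h2.
    have h3 : alpha R z.1 * z.2 <= 0 by rewrite -Ma0; exact: h1.
    by rewrite -(pmulr_rle0 _ (@alpha_gt0 R A I z.1)).
  rewrite /VoR Ma0 invr0 mulr0 -/Mu; split; last first.
    by rewrite div1r invr_ge0 ltW.
  apply: mulr_le0_ge0; first exact: le_trans hpr hMu00.
  by rewrite invr_ge0.
have Magt0 : 0 < Ma by rewrite lt_def Mapos hMa0.
have optgt0 : 0 < opt_value G by apply: lt_le_trans Magt0 hMaopt.
split.
  rewrite /VoR ler_pdivrMr // -/Mu.
  apply: (le_trans hpr); rewrite -{1}(divfK Mapos Mu).
  by apply: ler_wpM2l => //; apply: divr_ge0.
rewrite ler_pdivrMr // div1r.
apply: (le_trans hMuz); rewrite -[zstar.2](mulKf (lt0r_neq0 hal0)).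
by apply: ler_wpM2l => //; rewrite invr_ge0 ltW.
Qed.
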